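(* Let $0<x_1<\cdots<x_m<1$, $k_0,k_1\in\mathbb{R}$, $\bar y_1,\dots,\bar y_m\in\mathbb{R}$, and for each $j$ let $\varphi_j:\mathbb{R}\to\mathbb{R}$ be a Gevrey function of order $\sigma$ with $1<\sigma<2$. Put $y_j(t)=\bar y_j\varphi_j(t)$. Then, for every $j$, every $x\in(0,1)$ and every $t$, each of the following series converges: for $x\in(0,x_j)$, $$\sum_{n=0}^\infty\sum_{k=0}^n\frac{x^{2k+1}(x_j-1)^{2(n-k)+1}}{(2k+1)!\,(2(n-k)+1)!}y_j^{(n)}(t),\quad \sum_{n=0}^\infty\sum_{k=0}^n\frac{x^{2k+1}(x_j-1)^{2(n-k)}}{(2k+1)!\,(2(n-k))!}y_j^{(n)}(t),$$ $$\sum_{n=0}^\infty\sum_{k=0}^n\frac{x^{2k}(x_j-1)^{2(n-k)+1}}{(2k)!\,(2(n-k)+1)!}y_j^{(n)}(t),\quad \sum_{n=0}^\infty\sum_{k=0}^n\frac{x^{2k}(x_j-1)^{2(n-k)}}{(2k)!\,(2(n-k))!}y_j^{(n)}(t),$$ the same four series with the roles of $x$ and $x_j$ interchanged (i.e. $x_j^{\cdot}(x-1)^{\cdot}$ in place of $x^{\cdot}(x_j-1)^{\cdot}$) for $x\in[x_j,1)$; and the series $$\sum_{n=0}^\infty\frac{y_j^{(n)}(t)}{(2n+1)!},\qquad \sum_{n=0}^\infty\frac{y_j^{(n)}(t)}{(2n)!},\qquad \sum_{n=0}^\infty\frac{y_j^{(n+1)}(t)}{(2n+1)!}.$$ Consequently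 the series $$\xi^j(x,t)=\sum_{n=0}^\infty\sum_{k=0}^n\Big[\tfrac{k_0k_1x^{2k+1}(x_j-1)^{2(n-k)+1}}{(2k+1)!(2(n-k)+1)!}-\tfrac{k_0x^{2k+1}(x_j-1)^{2(n-k)}}{(2k+1)!(2(n-k))!}+\tfrac{k_1x^{2k}(x_j-1)^{2(n-k)+1}}{(2k)!(2(n-k)+1)!}-\tfrac{x^{2k}(x_j-1)^{2(n-k)}}{(2k)!(2(n-k))!}\Big]y_j^{(n)}(t)$$ for $x\in(0,x_j)$ (and its analogue with $x,x_j$ interchanged for $x\in[x_j,1)$), and $$u_j(t)=k_0k_1\sum_{n=0}^\infty\frac{y_j^{(n)}(t)}{(2n+1)!}+(k_0+k_1)\sum_{n=0}^\infty\frac{y_j^{(n)}(t)}{(2n)!}+\sum_{n=0}^\infty\frac{y_j^{(n+1)}(t)}{(2n+1)!}$$ are convergent.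
   Context: A smooth function $\varphi$ is called a Gevrey function of order $\sigma>0$ if there exist constants $K,M>0$ such that $|\varphi^{(k+1)}(t)|\le M\,(k!)^\sigma/K^k$ for all integers $k\ge0$ and all $t$ (in the paper, $\varphi_j$ are smooth transition functions from 0 to 1, constant outside a bounded interval $[0,T]$, so the bound is required on that interval). *)

(* Defs.v *)
From Stdlib Require Import Reals.
From Coquelicot Require Import Coquelicot.
Open Scope R_scope.

Definition smooth (phi : R -> R) : Prop :=
  forall (n : nat) (t : R), ex_derive_n phi n t.

Definition gevrey (sigma : R) (phi : R -> R) : Prop :=
  smooth phi /\
  exists K M : R, 0 < K /\ 0 < M /\
    forall (k : nat) (t : R),
      Rabs (Derive_n phi (S k) t) <= M * Rpower (INR (Factorial.fact k)) sigma / K ^ k.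

Definition coef (p q : nat) (a b : R) (n k : nat) : R :=
  a ^ (2 * k + p) * b ^ (2 * (n - k) + q)
  / (INR (Factorial.fact (2 * k + p)) * INR (Factorial.fact (2 * (n - k) + q))).

Definition dterm (p q : nat) (a b : R) (y : R -> R) (t : R) (n : nat) : R :=
  sum_f_R0 (fun k => coef p q a b n k) n * Derive_n y n t.

(* n-th term of the series defining xi^j (with a = x, b = x_j - 1 on (0,x_j),
   and a = x_j, b = x - 1 on [x_j,1)). *)
Definition xiterm (k0 k1 a b : R) (y : R -> R) (t : R) (n : nat) : R :=
  sum_f_R0 (fun k =>
      k0 * k1 * coef 1 1 a b n k
    - k0 * coef 1 0 a b n k
    + k1 * coef 0 1 a b n k
    - coef 0 0 a b n k) n * Derive_n y n t.

(* Main.v *)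
Require Import Defs.
From Stdlib Require Import Reals.
From Coquelicot Require Import Coquelicot.
From Stdlib Require Import Lra Lia.
Open Scope R_scope.

Lemma exp_le_mono a b : a <= b -> exp a <= exp b.
Proof. intros H; destruct (Rle_lt_or_eq_dec _ _ H) as [h|h].
 - left; now apply exp_increasing. - subst; lra. Qed.

Lemma term_le_sum (f : nat -> R) N i : (forall k, 0 <= f k) -> (i <= N)%nat -> f i <= sum_f_R0 f N.
Proof.
  intros Hf; induction N as [|N IH]; intros Hi.
  - assert (i = 0)%nat by lia; subst; simpl; lra.
  - simpl. destruct (Nat.eq_dec i (S N)) as [->|ne].
    + assert (0 <= sum_f_R0 f N) by (apply cond_pos_sum; auto). lra.
    + assert (f i <= sum_f_R0 f N) by (apply IH; lia). specialize (Hf (S N)); lra.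
Qed.

Lemma fact_pos k : 0 < INR (Factorial.fact k).
Proof. apply lt_0_INR, Factorial.lt_O_fact. Qed.

Lemma key (c sigma : R) : 0 < c -> sigma < 2 -> exists A, forall k,
  c ^ k * Rpower (INR (Factorial.fact k)) sigma / INR (Factorial.fact (2 * k)) <= A * (/2) ^ k.
Proof.
  intros Hc Hs.
  set (e := 2 - sigma).
  set (beta := (ln c + ln 2) / e).
  set (D := exp beta).
  exists (exp (e * D)). intros k.
  assert (HF := fact_pos k).
  set (F := INR (Factorial.fact k)) in *.
  set (L := ln F).
  assert (HD : 0 < D) by apply exp_pos.
  assert (S1 : INR k * beta - L <= D).
  { assert (H1 : D ^ k / F <= exp D).
    { eapply Rle_trans; [|apply (exp_ge_taylor D k); lra].
      apply (term_le_sum (fun k0 => D ^ k0 / INR (Factorial.fact k0))); [|lia].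
      intros k0. apply Rdiv_le_0_compat; [apply pow_le; lra| apply fact_pos]. }
    apply ln_le in H1; [|apply Rdiv_lt_0_compat; [apply pow_lt|]; lra].
    rewrite ln_exp, ln_div, ln_pow in H1; try apply pow_lt; try lra.
    assert (lD : ln D = beta) by (unfold D; apply ln_exp). rewrite lD in H1. unfold L; lra. }
  assert (S2 : F * F <= INR (Factorial.fact (2 * k))).
  { pose proof (RfactN_fact2N_factk k 0 ltac:(lia)) as H.
    rewrite Nat.sub_0_r in H. simpl (Factorial.fact 0) in H. unfold Rsqr in H.
    fold F in H. simpl INR in H. replace (2 * k)%nat with (k + (k + 0))%nat by lia. lra. }
  assert (HG : 0 < F * F) by (apply Rmult_lt_0_compat; lra).
  rewrite <- (Rpower_pow k c Hc), <- (Rpower_pow k (/2)) by lra.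
  unfold Rpower. fold L.
  rewrite ln_Rinv by lra.
  assert (EF : F * F = exp (2 * L)).
  { unfold L. replace (2 * ln F) with (ln F + ln F) by ring. rewrite exp_plus, exp_ln; auto. }
  apply Rle_trans with (exp (INR k * ln c) * exp (sigma * L) / (F * F)).
  { unfold Rdiv. apply Rmult_le_compat_l.
    - apply Rmult_le_pos; left; apply exp_pos.
    - apply Rinv_le_contravar; auto. }
  rewrite EF. unfold Rdiv. rewrite <- exp_Ropp, <- !exp_plus.
  apply exp_le_mono.
  assert (Hb : e * (INR k * beta) = INR k * (ln c + ln 2)).
  { unfold beta, e. field. lra. }
  assert (He : 0 < e) by (unfold e; lra).
  assert (e * (INR k * beta - L) <= e * D) by (apply Rmult_le_compat_l; lra).
  unfold e in *. nra.
Qed.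

Definition P (sigma : R) (k : nat) := Rpower (INR (Factorial.fact k)) sigma.

Lemma P_pos sigma k : 0 < P sigma k.
Proof. unfold P, Rpower. apply exp_pos. Qed.

Lemma exR_plus (a b : nat -> R) : ex_series a -> ex_series b -> ex_series (fun n => a n + b n).
Proof. intros; exact (ex_series_plus a b H H0). Qed.
Lemma exR_scal c (a : nat -> R) : ex_series a -> ex_series (fun n => c * a n).
Proof. intros; exact (ex_series_scal c a H). Qed.

Lemma series0 (u : nat -> R) c sigma L : 0 < c -> sigma < 2 -> 0 <= L ->
  (forall k, Rabs (u k) <= L * (c ^ k * P sigma k / INR (Factorial.fact (2 * k)))) ->
  ex_series u.
Proof.
  intros Hc Hs HL Hu. destruct (key c sigma Hc Hs) as [A HA].
  apply (ex_series_le u (fun k => (L * A) * (/2) ^ k)).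
  2: apply exR_scal; apply ex_series_geom; rewrite Rabs_pos_eq; lra.
  intros k. change (norm (u k)) with (Rabs (u k)).
    eapply Rle_trans; [apply Hu|]. rewrite Rmult_assoc.
    apply Rmult_le_compat_l; [exact HL| apply HA].
Qed.

Lemma series1 (u : nat -> R) c sigma L : 0 < c -> sigma < 2 -> 0 <= L ->
  (forall k, Rabs (u (S k)) <= L * (c ^ k * P sigma k / INR (Factorial.fact (2 * k)))) ->
  ex_series u.
Proof.
  intros. apply ex_series_incr_1. apply (series0 (fun k => u (S k)) c sigma L); auto.
Qed.

Lemma pow2_ge n : INR (S n) <= 2 ^ n.
Proof.
  induction n as [|n IH]. simpl; lra.
  rewrite S_INR. simpl pow. assert (1 <= 2 ^ n) by (apply pow_R1_Rle; lra). lra.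
Qed.

Lemma inner_bound (g : nat -> R) n Lg : 0 <= Lg ->
  (forall k, (k <= n)%nat -> Rabs (g k) <= Lg / (INR (Factorial.fact (2 * k)) * INR (Factorial.fact (2 * (n - k))))) ->
  Rabs (sum_f_R0 g n) <= Lg * 8 ^ n / INR (Factorial.fact (2 * n)).
Proof.
  intros HL Hg.
  eapply Rle_trans; [apply sum_f_R0_triangle|].
  assert (HF := fact_pos (2 * n)).
  apply Rle_trans with (sum_f_R0 (fun _ => Lg * 4 ^ n / INR (Factorial.fact (2 * n))) n).
  { apply sum_Rle. intros k Hk. eapply Rle_trans; [apply Hg; auto|].
    assert (EC : Lg / (INR (Factorial.fact (2 * k)) * INR (Factorial.fact (2 * (n - k))))
                 = Lg * Binomial.C (2 * n) (2 * k) / INR (Factorial.fact (2 * n))).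
    { unfold Binomial.C. replace (2 * n - 2 * k)%nat with (2 * (n - k))%nat by lia.
      assert (H1 := fact_pos (2 * k)). assert (H2 := fact_pos (2 * (n - k))).
      field; lra. }
    rewrite EC. unfold Rdiv. apply Rmult_le_compat_r; [left; apply Rinv_0_lt_compat; auto|].
    apply Rmult_le_compat_l; auto.
    assert (E4 : 4 ^ n = (1 + 1) ^ (2 * n)) by (rewrite pow_mult; f_equal; lra).
    rewrite E4, binomial.
    eapply Rle_trans; [|apply (term_le_sum _ _ (2 * k)); [|lia]].
    - cbv beta. rewrite !pow1. lra.
    - intros i. rewrite !pow1, !Rmult_1_r. unfold Binomial.C.
      apply Rdiv_le_0_compat; [left; apply fact_pos|].
      apply Rmult_lt_0_compat; apply fact_pos. }
  rewrite sum_cte.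
  assert (H := pow2_ge n).
  assert (E8 : 8 ^ n = 2 ^ n * 4 ^ n) by (rewrite <- Rpow_mult_distr; f_equal; lra).
  rewrite E8. unfold Rdiv.
  assert (0 <= Lg * 4 ^ n * / INR (Factorial.fact (2 * n))).
  { apply Rmult_le_pos; [apply Rmult_le_pos; auto; apply pow_le; lra| left; apply Rinv_0_lt_compat; auto]. }
  nra.
Qed.

Lemma fact_mono a b : (a <= b)%nat -> INR (Factorial.fact a) <= INR (Factorial.fact b).
Proof. intros; apply le_INR, Factorial.fact_le; auto. Qed.

Lemma pow_abs_le1 a e : Rabs a <= 1 -> Rabs (a ^ e) <= 1.
Proof.
  intros H. rewrite <- RPow_abs. rewrite <- (pow1 e). apply pow_incr. split; auto. apply Rabs_pos.
Qed.

Lemma coef_bound p q a b n k : Rabs a <= 1 -> Rabs b <= 1 ->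
  Rabs (coef p q a b n k) <= 1 / (INR (Factorial.fact (2 * k)) * INR (Factorial.fact (2 * (n - k)))).
Proof.
  intros Ha Hb. unfold coef, Rdiv.
  assert (H1 := fact_pos (2 * k + p)). assert (H2 := fact_pos (2 * (n - k) + q)).
  assert (H3 := fact_pos (2 * k)). assert (H4 := fact_pos (2 * (n - k))).
  assert (H5 := fact_mono (2 * k) (2 * k + p) ltac:(lia)).
  assert (H6 := fact_mono (2 * (n - k)) (2 * (n - k) + q) ltac:(lia)).
  rewrite Rabs_mult, Rabs_mult, Rabs_inv.
  rewrite (Rabs_pos_eq (INR (Factorial.fact (2 * k + p)) * INR (Factorial.fact (2 * (n - k) + q)))) by (apply Rmult_le_pos; lra).
  assert (E1 := pow_abs_le1 a (2 * k + p) Ha).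
  assert (E2 := pow_abs_le1 b (2 * (n - k) + q) Hb).
  assert (E3 := Rabs_pos (a ^ (2 * k + p))). assert (E4 := Rabs_pos (b ^ (2 * (n - k) + q))).
  apply Rmult_le_compat; try nra.
  - left; apply Rinv_0_lt_compat; nra.
  - apply Rinv_le_contravar; [nra|]. apply Rmult_le_compat; lra.
Qed.

Lemma deriv_bound sigma yb phi : gevrey sigma phi -> exists K C, 0 < K /\ 0 <= C /\
  forall k t, Rabs (Derive_n (fun t => yb * phi t) (S k) t) <= C * ((/K) ^ k * P sigma k).
Proof.
  intros [_ [K [M [HK [HM HB]]]]].
  exists K, (Rabs yb * M). repeat split; auto.
  - apply Rmult_le_pos; [apply Rabs_pos| lra].
  - intros k t. rewrite Derive_n_scal_l, Rabs_mult.
    rewrite Rmult_assoc. apply Rmult_le_compat_l; [apply Rabs_pos|].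
    eapply Rle_trans; [apply HB|]. unfold P. rewrite <- Rinv_pow by lra.
    right; unfold Rdiv; ring.
Qed.

Lemma dterm_series (I D : nat -> R) Lg C K sigma : 0 <= Lg -> 0 <= C -> 0 < K -> sigma < 2 ->
  (forall n, Rabs (I n) <= Lg * 8 ^ n / INR (Factorial.fact (2 * n))) ->
  (forall k, Rabs (D (S k)) <= C * ((/K) ^ k * P sigma k)) ->
  ex_series (fun n => I n * D n).
Proof.
  intros HL HC HK Hs HI HD.
  apply (series1 _ (8 / K) sigma (Lg * 8 * C)); auto.
  - apply Rdiv_lt_0_compat; lra.
  - apply Rmult_le_pos; lra.
  - intros k. rewrite Rabs_mult.
    assert (A1 := HI (S k)). assert (A2 := HD k).
    assert (F1 := fact_pos (2 * k)). assert (F2 := fact_pos (2 * S k)).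
    assert (F3 := fact_mono (2 * k) (2 * S k) ltac:(lia)).
    assert (PP := P_pos sigma k).
    assert (Q1 : 0 <= (/K) ^ k) by (apply pow_le; left; apply Rinv_0_lt_compat; lra).
    assert (Q2 : 0 <= 8 ^ k) by (apply pow_le; lra).
    set (X := Lg * 8 ^ k * C * (/K) ^ k * P sigma k).
    assert (HX : 0 <= X) by (unfold X; repeat apply Rmult_le_pos; lra).
    apply Rle_trans with ((Lg * 8 ^ S k / INR (Factorial.fact (2 * S k))) * (C * ((/K) ^ k * P sigma k))).
    { apply Rmult_le_compat; try apply Rabs_pos; auto. }
    apply Rle_trans with (8 * X / INR (Factorial.fact (2 * S k))).
    { right. unfold X. simpl pow. field. lra. }
    apply Rle_trans with (8 * X / INR (Factorial.fact (2 * k))).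
    { unfold Rdiv. apply Rmult_le_compat_l; [lra|]. apply Rinv_le_contravar; lra. }
    right. unfold X, Rdiv. rewrite Rpow_mult_distr. field. lra.
Qed.

Lemma inner_coef p q a b n : Rabs a <= 1 -> Rabs b <= 1 ->
  Rabs (sum_f_R0 (fun k => coef p q a b n k) n) <= 1 * 8 ^ n / INR (Factorial.fact (2 * n)).
Proof. intros; apply inner_bound; [lra|]. intros; apply coef_bound; auto. Qed.

Lemma inner_xi k0 k1 a b n : Rabs a <= 1 -> Rabs b <= 1 ->
  Rabs (sum_f_R0 (fun k => k0 * k1 * coef 1 1 a b n k - k0 * coef 1 0 a b n k
      + k1 * coef 0 1 a b n k - coef 0 0 a b n k) n)
  <= (Rabs (k0 * k1) + Rabs k0 + Rabs k1 + 1) * 8 ^ n / INR (Factorial.fact (2 * n)).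
Proof.
  intros Ha Hb. apply inner_bound.
  { assert (H1 := Rabs_pos (k0 * k1)). assert (H2 := Rabs_pos k0). assert (H3 := Rabs_pos k1). lra. }
  intros k Hk.
  set (W := 1 / (INR (Factorial.fact (2 * k)) * INR (Factorial.fact (2 * (n - k))))).
  assert (C1 := coef_bound 1 1 a b n k Ha Hb). assert (C2 := coef_bound 1 0 a b n k Ha Hb).
  assert (C3 := coef_bound 0 1 a b n k Ha Hb). assert (C4 := coef_bound 0 0 a b n k Ha Hb).
  fold W in C1, C2, C3, C4.
  replace ((Rabs (k0 * k1) + Rabs k0 + Rabs k1 + 1) /
     (INR (Factorial.fact (2 * k)) * INR (Factorial.fact (2 * (n - k)))))
    with ((Rabs (k0 * k1) + Rabs k0 + Rabs k1 + 1) * W) by (unfold W, Rdiv; ring).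
  eapply Rle_trans; [apply Rabs_triang|]. rewrite Rabs_Ropp.
  eapply Rle_trans; [apply Rplus_le_compat_r, Rabs_triang|].
  eapply Rle_trans; [apply Rplus_le_compat_r, Rplus_le_compat_r, Rabs_triang|].
  rewrite Rabs_Ropp, !Rabs_mult.
  assert (H1 := Rabs_pos (k0 * k1)). assert (H2 := Rabs_pos k0). assert (H3 := Rabs_pos k1).
  rewrite Rabs_mult in H1.
  assert (Rabs k0 * Rabs k1 * Rabs (coef 1 1 a b n k) <= Rabs k0 * Rabs k1 * W) by (apply Rmult_le_compat_l; lra).
  assert (Rabs k0 * Rabs (coef 1 0 a b n k) <= Rabs k0 * W) by (apply Rmult_le_compat_l; lra).
  assert (Rabs k1 * Rabs (coef 0 1 a b n k) <= Rabs k1 * W) by (apply Rmult_le_compat_l; lra).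
  lra.
Qed.

Theorem proposition3
  (m : nat) (xs : nat -> R) (k0 k1 sigma : R)
  (ybar : nat -> R) (phi : nat -> R -> R)
  (Hpos : forall i, (i < m)%nat -> 0 < xs i)
  (Hinc : forall i, (S i < m)%nat -> xs i < xs (S i))
  (Hlt1 : forall i, (i < m)%nat -> xs i < 1)
  (Hsig : 1 < sigma < 2)
  (Hgev : forall j, (j < m)%nat -> gevrey sigma (phi j)) :
  forall (j : nat), (j < m)%nat ->
  let y := fun t => ybar j * phi j t in
  forall (x t : R), 0 < x < 1 ->
    ((x < xs j) ->
       ex_series (dterm 1 1 x (xs j - 1) y t) /\
       ex_series (dterm 1 0 x (xs j - 1) y t) /\
       ex_series (dterm 0 1 x (xs j - 1) y t) /\
       ex_series (dterm 0 0 x (xs j - 1) y t) /\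
       ex_series (xiterm k0 k1 x (xs j - 1) y t)) /\
    ((xs j <= x) ->
       ex_series (dterm 1 1 (xs j) (x - 1) y t) /\
       ex_series (dterm 1 0 (xs j) (x - 1) y t) /\
       ex_series (dterm 0 1 (xs j) (x - 1) y t) /\
       ex_series (dterm 0 0 (xs j) (x - 1) y t) /\
       ex_series (xiterm k0 k1 (xs j) (x - 1) y t)) /\
    ex_series (fun n => Derive_n y n t / INR (Factorial.fact (2 * n + 1))) /\
    ex_series (fun n => Derive_n y n t / INR (Factorial.fact (2 * n))) /\
    ex_series (fun n => Derive_n y (S n) t / INR (Factorial.fact (2 * n + 1))) /\
    ex_series (fun n =>
        k0 * k1 * (Derive_n y n t / INR (Factorial.fact (2 * n + 1)))
      + (k0 + k1) * (Derive_n y n t / INR (Factorial.fact (2 * n)))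
      + Derive_n y (S n) t / INR (Factorial.fact (2 * n + 1))).
Proof.
  intros j Hj y x t Hx.
  destruct (deriv_bound sigma (ybar j) (phi j) (Hgev j Hj)) as [K [C [HK [HC HD]]]].
  assert (HDy : forall k, Rabs (Derive_n y (S k) t) <= C * ((/K) ^ k * P sigma k)) by (intros; apply HD).
  assert (Hs : sigma < 2) by lra.
  assert (X1 := Hpos j Hj). assert (X2 := Hlt1 j Hj).
  assert (Ra : forall a b, Rabs a <= 1 -> Rabs b <= 1 -> forall p q,
    ex_series (dterm p q a b y t) /\ ex_series (xiterm k0 k1 a b y t)).
  { intros a b Ha Hb p q. split.
    - unfold dterm. apply (dterm_series _ _ 1 C K sigma); try lra; auto.
      intros n; apply inner_coef; auto.
    - unfold xiterm. apply (dterm_series _ _ (Rabs (k0 * k1) + Rabs k0 + Rabs k1 + 1) C K sigma); auto.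
      + assert (H1 := Rabs_pos (k0 * k1)). assert (H2 := Rabs_pos k0). assert (H3 := Rabs_pos k1). lra.
      + intros n; apply inner_xi; auto. }
  assert (S1 : ex_series (fun n => Derive_n y n t / INR (Factorial.fact (2 * n + 1)))).
  { apply (ex_series_ext (fun n => / INR (Factorial.fact (2 * n + 1)) * Derive_n y n t)); [intros n; unfold Rdiv; apply Rmult_comm|].
    apply (dterm_series (fun n => / INR (Factorial.fact (2 * n + 1))) (fun n => Derive_n y n t) 1 C K sigma); try lra; auto.
    intros n. assert (F1 := fact_pos (2 * n)). assert (F2 := fact_pos (2 * n + 1)).
    assert (F3 := fact_mono (2 * n) (2 * n + 1) ltac:(lia)).
    assert (E : 1 <= 8 ^ n) by (apply pow_R1_Rle; lra).
    rewrite Rabs_pos_eq by (left; apply Rinv_0_lt_compat; lra).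
    unfold Rdiv. rewrite Rmult_1_l.
    apply Rle_trans with (/ INR (Factorial.fact (2 * n))); [apply Rinv_le_contravar; lra|].
    rewrite <- (Rmult_1_l (/ INR (Factorial.fact (2 * n)))) at 1.
    apply Rmult_le_compat_r; [left; apply Rinv_0_lt_compat|]; lra. }
  assert (S2 : ex_series (fun n => Derive_n y n t / INR (Factorial.fact (2 * n)))).
  { apply (ex_series_ext (fun n => / INR (Factorial.fact (2 * n)) * Derive_n y n t)); [intros n; unfold Rdiv; apply Rmult_comm|].
    apply (dterm_series (fun n => / INR (Factorial.fact (2 * n))) (fun n => Derive_n y n t) 1 C K sigma); try lra; auto.
    intros n. assert (F1 := fact_pos (2 * n)).
    assert (E : 1 <= 8 ^ n) by (apply pow_R1_Rle; lra).
    rewrite Rabs_pos_eq by (left; apply Rinv_0_lt_compat; lra).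
    unfold Rdiv. rewrite Rmult_1_l. rewrite <- (Rmult_1_l (/ _)) at 1.
    apply Rmult_le_compat_r; [left; apply Rinv_0_lt_compat|]; lra. }
  assert (S3 : ex_series (fun n => Derive_n y (S n) t / INR (Factorial.fact (2 * n + 1)))).
  { apply (series0 _ (/ K) sigma C); auto.
    - apply Rinv_0_lt_compat; lra.
    - intros k. assert (F1 := fact_pos (2 * k)). assert (F2 := fact_pos (2 * k + 1)).
      assert (F3 := fact_mono (2 * k) (2 * k + 1) ltac:(lia)).
      unfold Rdiv. rewrite Rabs_mult, (Rabs_pos_eq (/ _)) by (left; apply Rinv_0_lt_compat; lra).
      rewrite <- Rmult_assoc.
      apply Rmult_le_compat; try apply Rabs_pos.
      + left; apply Rinv_0_lt_compat; lra.
      + apply HDy.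
      + apply Rinv_le_contravar; lra. }
  split; [intros Hxj; repeat split; first [ apply (fun a b h1 h2 p q => proj1 (Ra a b h1 h2 p q)) | apply (fun a b h1 h2 => proj2 (Ra a b h1 h2 0%nat 0%nat)) ]; apply Rabs_le; lra|].
  split; [intros Hxj; repeat split; first [ apply (fun a b h1 h2 p q => proj1 (Ra a b h1 h2 p q)) | apply (fun a b h1 h2 => proj2 (Ra a b h1 h2 0%nat 0%nat)) ]; apply Rabs_le; lra|].
  split; [exact S1|]. split; [exact S2|]. split; [exact S3|].
  apply exR_plus; [apply exR_plus|]; [apply exR_scal, S1| apply exR_scal, S2| exact S3].
Qed.
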